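(* Let $\Omega$ be a Polish space and $(T(t))_{t\ge0}\subset\mathscr{L}(\mathscr{M}(\Omega),\sigma)$ a Markovian semigroup with transition kernels $k_t$. If it is $t_0$-regular for some $t_0>0$, then it is $s$-regular for every $s\ge t_0$, and moreover the measures $k_s(x,\cdot)$ and $k_t(y,\cdot)$ are equivalent for all $s,t\ge t_0$ and all $x,y\in\Omega$.
   Context: $\mathscr{M}(\Omega)$: finite signed Borel measures. A weakly continuous operator is one of the form $(T\mu)(A)=\int k(x,A)\,d\mu(x)$ with $k$ a bounded transition kernel (map $\Omega\times\mathscr{B}(\Omega)\to\mathbb{R}$, signed measure in the second variable, Borel measurable in the first, $\sup_x\lvert k\rvert(x,\Omega)<\infty$); $\mathscr{L}(\mathscr{M}(\Omega),\sigma)$ is the space of such operators. A semigroup $(T(t))_{t\ge0}$ satisfies $T(0)=I$ and $T(t+s)=T(t)T(s)$; $k_t$ denotes the kernel of $T(t)$. It is Markovian if each $k_t(x,\cdot)$ is a probability measure. For $t_0>0$ it is $t_0$-regular if $k_{t_0}(x,\cdot)$ and $k_{t_0}(y,\cdot)$ are equivalent (mutually absolutely continuous) for all $x,y\in\Omega$. *)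

(* Defs.v *)
From HB Require Import structures.
From mathcomp Require Import all_boot all_order all_algebra.
From mathcomp Require Import all_classical all_reals all_analysis.
Set Implicit Arguments. Unset Strict Implicit. Unset Printing Implicit Defensive.
Import Order.TTheory GRing.Theory Num.Theory.
Local Open Scope classical_set_scope.
Local Open Scope ring_scope.

Definition polish (R : realType) (T : topologicalType) : Prop :=
  (exists D : set T, countable D /\ dense D) /\
  exists dist : T -> T -> R,
    [/\ (forall x y, dist x y = 0 <-> x = y),
        (forall x y, dist x y = dist y x),
        (forall x y z, dist x z <= dist x y + dist y z),
        (forall A : set T, open A <->
           (forall x, A x -> exists2 e : R, 0 < e & forall y, dist x y < e -> A y)) &
        (forall u : nat -> T,
           (forall e : R, 0 < e -> exists N, forall m n, (N <= m)%N -> (N <= n)%N ->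
              dist (u m) (u n) < e) ->
           exists l : T, u @ \oo --> l)].

Definition borel (T : ptopologicalType) := g_sigma_algebraType (@open T).

Definition equiv_measures d (T : measurableType d) (R : realType)
  (m1 m2 : set T -> \bar R) : Prop := m1 `<< m2 /\ m2 `<< m1.

(* A family of Markov (probability) transition kernels k_t, t >= 0, on the
   Borel sets of T, whose associated operators
   (T(t) mu)(A) = \int k_t(x, A) dmu(x) form a semigroup:
   T(0) = I  <->  k_0(x, .) = delta_x,
   T(t+s) = T(t) T(s)  <->  k_{t+s}(x, A) = \int k_t(y, A) k_s(x, dy). *)
Definition markov_semigroup (R : realType) (T : ptopologicalType)
  (k : R -> R.-pker (borel T) ~> (borel T)) : Prop :=
  (forall (x : borel T) (A : set (borel T)), measurable A -> k 0 x A = \d_x A) /\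
  (forall (t s : R), 0 <= t -> 0 <= s -> forall (x : borel T) (A : set (borel T)),
      measurable A ->
      k (t + s) x A = (\int[k s x]_y k t y A)%E).

Definition regular_at (R : realType) (T : ptopologicalType)
  (k : R -> R.-pker (borel T) ~> (borel T)) (t0 : R) : Prop :=
  forall x y : borel T, equiv_measures (k t0 x) (k t0 y).

(* Main.v *)
Require Import Defs.
From HB Require Import structures.
From mathcomp Require Import all_boot all_order all_algebra.
From mathcomp Require Import all_classical all_reals all_analysis.
Import Order.TTheory GRing.Theory Num.Theory.
Local Open Scope classical_set_scope.
Local Open Scope ring_scope.

Lemma key_zero (R : realType) (T : ptopologicalType)
  (k : R -> R.-pker (borel T) ~> (borel T)) (t0 : R) :
  markov_semigroup k -> 0 <= t0 -> regular_at k t0 ->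
  forall (s : R) (x : borel T) (A : set (borel T)), t0 <= s -> measurable A ->
  (k s x A = 0%E <-> forall z, k t0 z A = 0%E).
Proof.
move=> [_ hsg] t00 hreg s x A hs mA.
have reg0 : forall y z, k t0 y A = 0%E -> k t0 z A = 0%E.
  move=> y z h; have [_ hd] := hreg y z.
  by move/null_content_dominatesP: hd => hd; apply: hd.
have -> : k s x A = (\int[k (s - t0)%R x]_y k t0 y A)%E.
  have := hsg t0 (s - t0)%R t00 _ x A mA.
  have -> : (t0 + (s - t0))%R = s by rewrite addrC subrK.
  move=> <- //.
  by rewrite subr_ge0.
have mf := measurable_kernel (k t0) A mA.
split; last first.
  move=> h; rewrite (eq_integral (fun _ => 0%E)); last by move=> y _; exact: h.
  by rewrite integral0.
move=> h0.
have : (\int[k (s - t0)%R x]_(y in setT) `|k t0 y A| = 0)%E.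
  rewrite -h0; apply: eq_integral => y _; rewrite gee0_abs //.
move/(ae_eq_integral_abs _ measurableT mf) => [N [mN N0 sN]].
have [y Ny] : exists y, ~ N y.
  apply: contrapT => hn.
  have NT : N = setT.
    by apply/seteqP; split => // y _; apply: contrapT => ny; apply: hn; exists y.
  by move: N0; rewrite NT prob_kernel => /eqP; rewrite onee_eq0.
move=> z.
apply: (reg0 y); apply: contrapT => hy; apply: Ny; apply: sN => /=.
by move=> /(_ I).
Qed.

Theorem mainTheorem10 (R : realType) (T : ptopologicalType)
  (k : R -> R.-pker (borel T) ~> (borel T)) (t0 : R) :
  polish R T -> markov_semigroup k -> 0 < t0 -> regular_at k t0 ->
  (forall s : R, t0 <= s -> regular_at k s) /\
  (forall (s t : R) (x y : borel T), t0 <= s -> t0 <= t ->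
     equiv_measures (k s x) (k t y)).
Proof.
move=> _ hm /ltW t00 hreg.
have H : forall (s t : R) (x y : borel T), t0 <= s -> t0 <= t ->
     equiv_measures (k s x) (k t y).
  move=> s t x y hs ht; split; apply/null_content_dominatesP => A mA h.
  - by apply: (proj2 (@key_zero _ _ _ _ hm t00 hreg s x A hs mA)); apply: (proj1 (@key_zero _ _ _ _ hm t00 hreg t y A ht mA)).
  - by apply: (proj2 (@key_zero _ _ _ _ hm t00 hreg t y A ht mA)); apply: (proj1 (@key_zero _ _ _ _ hm t00 hreg s x A hs mA)).
split => // s hs x y; exact: H.
Qed.
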